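(* For every $\epsilon>0$ there is $\nu_0(\epsilon)$ such that every numerical semigroup $S$ with minimal generators $a_1<a_2<\cdots<a_\nu$ satisfying (i) $a_2>\frac{c(S)+\mu(S)}{3}$, (ii) $\nu=\nu(S)\ge\nu_0(\epsilon)$, and (iii) $\mu(S)\le\frac{8}{25}\nu^2+\frac15\nu-\frac12-\epsilon$, satisfies Wilf's conjecture, i.e. $\nu(S)\,|L(S)|\ge c(S)$.
   Context: A numerical semigroup is a submonoid $S\subseteq\mathbb{N}$ with finite complement. $\nu(S)$ is the number of minimal generators (embedding dimension), $\mu(S)=a_1$ the smallest minimal generator (multiplicity), $c(S)$ the conductor (least integer with $c(S)+\mathbb{N}\subseteq S$), and $L(S)=\{x\in S: 0\le x<c(S)\}$. $S$ satisfies Wilf's conjecture if $\nu(S)|L(S)|\ge c(S)$. *)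

(* Defs.v *)
From mathcomp Require Import all_boot all_order all_algebra.
Set Implicit Arguments. Unset Strict Implicit. Unset Printing Implicit Defensive.

Definition is_numerical_semigroup (S : pred nat) : Prop :=
  S 0 /\ (forall x y, S x -> S y -> S (x + y)) /\ (exists N, forall n, N <= n -> S n).

Definition min_gen (S : pred nat) (x : nat) : Prop :=
  S x /\ 0 < x /\ ~ (exists y z, 0 < y /\ 0 < z /\ S y /\ S z /\ x = y + z).

Definition is_conductor (S : pred nat) (c : nat) : Prop :=
  (forall n, c <= n -> S n) /\ (forall c', (forall n, c' <= n -> S n) -> c <= c').

Definition card_L (S : pred nat) (c : nat) : nat := count S (iota 0 c).

(* Main.v *)
Require Import Defs.
From mathcomp Require Import all_boot all_order all_algebra.
From mathcomp Require Import zify.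
From Stdlib Require Import Classical.
Import Order.TTheory GRing.Theory Num.Theory.
Set Implicit Arguments. Unset Strict Implicit. Unset Printing Implicit Defensive.

Lemma nn_pair c m g h : 0 < m -> g + h < c + m ->
  (c+m-1) %/ m <= (c+m-1-g) %/ m + (c+m-1-h) %/ m + (c + m - ((c+m-1) %/ m * m - c) <= g + h).
Proof.
move=> m0 gh.
set q := (c+m-1) %/ m; set a := (c+m-1-g) %/ m; set b := (c+m-1-h) %/ m.
have Ha := ltn_ceil (c+m-1-g) m0. have Hb := ltn_ceil (c+m-1-h) m0.
have Hq := ltn_ceil (c+m-1) m0. have Hq2 := leq_trunc_div (c+m-1) m.
rewrite -/a -/b -/q in Ha Hb Hq Hq2 *.
rewrite !mulSn in Ha Hb Hq.
have [H|H] := leqP (c + m - (q * m - c)) (g + h).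
- rewrite addn1.
  have [//|Hlt] := leqP q (a+b).+1.
  have : (a+b).+2 * m <= q * m by rewrite leq_mul2r Hlt orbT.
  rewrite !mulSn mulnDl.
  move: H Ha Hb Hq Hq2; move: (a * m) (b * m) (q * m) => A B Q. lia.
- rewrite addn0.
  have [//|Hlt] := leqP q (a+b).
  have : (a+b).+1 * m <= q * m by rewrite leq_mul2r Hlt orbT.
  rewrite !mulSn mulnDl.
  move: H Ha Hb Hq Hq2; move: (a * m) (b * m) (q * m) => A B Q. lia.
Qed.
Lemma sum_bool_count (T : Type) (a : pred T) (s : seq T) :
  \sum_(i <- s) (a i : nat) = count a s.
Proof. elim: s => [|x s IH]; by rewrite ?big_nil // big_cons IH. Qed.

Lemma sum_const_s (T : Type) (s : seq T) (k : nat) : \sum_(i <- s) k = size s * k.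
Proof. elim: s => [|x s IH]; by rewrite ?big_nil // big_cons IH mulSn. Qed.

Lemma sum_bool_mul (T : Type) (a : pred T) (s : seq T) k :
  \sum_(i <- s) (a i : nat) * k = count a s * k.
Proof. elim: s => [|x s IH]; by rewrite ?big_nil // big_cons IH /= mulnDl. Qed.

Lemma leq_sum_in (T : eqType) (s : seq T) (F G : T -> nat) :
  (forall i, i \in s -> F i <= G i) -> \sum_(i <- s) F i <= \sum_(i <- s) G i.
Proof.
elim: s => [|x s IH] H; first by rewrite !big_nil.
rewrite !big_cons leq_add //; first by apply: H; rewrite inE eqxx.
by apply: IH => i Hi; apply: H; rewrite inE Hi orbT.
Qed.

Lemma term_le_sum (T : eqType) (s : seq T) (F : T -> nat) x :
  x \in s -> F x <= \sum_(i <- s) F i.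
Proof.
elim: s => [|y s IH] //; rewrite inE big_cons => /orP [/eqP ->|H].
  exact: leq_addr.
by apply: leq_trans (IH H) _; apply: leq_addl.
Qed.

Lemma count_le_ge (s : seq nat) g : uniq s ->
  count (fun h => g <= h) s + count (fun h => h <= g) s <= (size s).+1.
Proof.
move=> us. rewrite -count_predUI.
have H1 : count (predU (fun h => g <= h) (fun h => h <= g)) s <= size s by apply: count_size.
have H2 : count (predI (fun h => g <= h) (fun h => h <= g)) s <= count (pred1 g) s.
  apply: sub_count => h /= /andP [a b]; apply/eqP; apply/eqP; rewrite eqn_leq a b // .
rewrite (count_uniq_mem _ us) in H2.
case: (g \in s) H2 => /= H2; lia.
Qed.

Lemma count_main (m c q rho : nat) (w nn : nat -> nat) (Gp : seq nat) :
  0 < m -> uniq Gp ->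
  (forall r, r < m -> w r %% m = r) ->
  (forall r, r < m -> w r < c + m) ->
  c + rho = q * m -> rho <= m ->
  w 0 = 0 -> nn 0 = q -> (forall g, g \in Gp -> 0 < g) ->
  (forall g, g \in Gp -> exists2 r, r < m & w r = g) ->
  (forall r, r < m -> 0 < r -> w r \in Gp \/ exists g h, [/\ g \in Gp, h \in Gp, g <= h, w r = g + h &
        q <= nn g + nn h + (c + m - rho <= w r)]) ->
  c <= (size Gp).+1 * \sum_(r <- iota 0 m) nn (w r).
Proof.
move=> m0 uG wmod wlt Hcq Hrho w0 nn0 Gpos Gex Hcl.
have Lone : forall s, \sum_(r <- iota 0 m) (w r == s : nat) <= 1.
  move=> s; apply: (@leq_trans (\sum_(r <- iota 0 m) (r == s %% m : nat))).
    apply: leq_sum_in => r; rewrite mem_iota add0n => /andP [_ rm].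
    case: eqP => // <-; by rewrite wmod // eqxx.
  rewrite sum_bool_count (count_uniq_mem _ (iota_uniq 0 m)); by case: (_ \in _).
set T3 := fun r => \sum_(g <- Gp) \sum_(h <- Gp) (g <= h) * ((g + h == w r) * (nn g + nn h)).
have step1 : q * m <= \sum_(r <- iota 0 m) (q * (r == 0) + q * (w r \in Gp) + T3 r
                                             + (c + m - rho <= w r)).
  rewrite mulnC -{1}(size_iota 0 m) -sum_const_s; apply: leq_sum_in => r.
  rewrite mem_iota add0n => /andP [_ rm].
  case: (posnP r) => [->|rpos]; first by rewrite muln1 -!addnA leq_addr.
  rewrite muln0 add0n.
  case: (Hcl r rm rpos) => [->|[g [h [gG hG gh wgh Hq]]]].
    by rewrite muln1 -!addnA leq_addr.
  apply: (leq_trans Hq); rewrite leq_add2r; apply: leq_trans (leq_addl _ _).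
  rewrite /T3; apply: leq_trans (term_le_sum _ gG).
  apply: leq_trans (term_le_sum _ hG).
  by rewrite gh wgh eqxx !mul1n.
rewrite !big_split /= in step1.
have S1 : \sum_(r <- iota 0 m) q * (r == 0) <= q.
  rewrite -big_distrr /= sum_bool_count (count_uniq_mem _ (iota_uniq 0 m)).
  by case: (_ \in _); rewrite ?muln1 ?muln0.
have S2 : \sum_(r <- iota 0 m) q * (w r \in Gp) <= q * size Gp.
  rewrite -big_distrr /= leq_mul2l; apply/orP; right.
  apply: (@leq_trans (\sum_(r <- iota 0 m) \sum_(g <- Gp) (w r == g : nat))).
    apply: leq_sum_in => r _; rewrite sum_bool_count.
    have -> : count (fun g => w r == g) Gp = count (pred1 (w r)) Gp.
      by apply: eq_count => g /=; rewrite eq_sym.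
    by rewrite (count_uniq_mem _ uG).
  rewrite exchange_big /= -(muln1 (size Gp)) -sum_const_s.
  apply: leq_sum_in => g _; exact: Lone.
have S3 : \sum_(r <- iota 0 m) T3 r <= (size Gp).+1 * \sum_(g <- Gp) nn g.
  apply: (@leq_trans (\sum_(g <- Gp) \sum_(h <- Gp) (g <= h) * (nn g + nn h))).
    rewrite /T3 exchange_big /=; apply: leq_sum_in => g _.
    rewrite exchange_big /=; apply: leq_sum_in => h _.
    rewrite -big_distrr /= leq_mul2l; apply/orP; right.
    rewrite -big_distrl /= -{2}(mul1n (nn g + nn h)) leq_mul2r; apply/orP; right.
    under eq_bigr => r _ do rewrite eq_sym.
    exact: Lone.
  have E : forall g h, (g <= h) * (nn g + nn h) = (g <= h) * nn g + (g <= h) * nn h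
    by move=> g h; rewrite mulnDr.
  under eq_bigr => g _ do under eq_bigr => h _ do rewrite E.
  under eq_bigr => g _ do rewrite big_split /=.
  rewrite big_split /= [X in _ + X <= _]exchange_big /=.
  rewrite -big_split /= big_distrr /=; apply: leq_sum_in => g gG.
  rewrite (sum_bool_mul (fun i => g <= i)) (sum_bool_mul (fun i => i <= g)) -mulnDl.
  rewrite leq_mul2r; apply/orP; right; exact: count_le_ge.
have S4 : \sum_(r <- iota 0 m) (c + m - rho <= w r : nat) <= rho.
  apply: (@leq_trans (\sum_(r <- iota 0 m) \sum_(s <- iota (c + m - rho) rho) (w r == s : nat))).
    apply: leq_sum_in => r; rewrite mem_iota add0n => /andP [_ rm].
    have [H|H] := leqP (c + m - rho) (w r); last by [].
    have : w r \in iota (c + m - rho) rho by rewrite mem_iota H /=; have := wlt r rm; lia.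
    move=> /(term_le_sum (fun s => (w r == s : nat))); by rewrite eqxx.
  rewrite exchange_big /=.
  apply: (@leq_trans (\sum_(s <- iota (c + m - rho) rho) 1)).
    by apply: leq_sum_in => s _; exact: Lone.
  by rewrite sum_const_s size_iota muln1.
have step2 : q + \sum_(g <- Gp) nn g <= \sum_(r <- iota 0 m) nn (w r).
  apply: (@leq_trans (\sum_(r <- iota 0 m) (q * (r == 0) + \sum_(g <- Gp) (w r == g) * nn g))).
    rewrite big_split /= leq_add //.
      have : 0 \in iota 0 m by rewrite mem_iota.
      by move=> /(term_le_sum (fun r => q * (r == 0))); rewrite eqxx muln1.
    rewrite exchange_big /=; apply: leq_sum_in => g gG.
    rewrite -big_distrl /= -{1}(mul1n (nn g)) leq_mul2r; apply/orP; right.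
    have [r rm wr] := Gex g gG.
    have : r \in iota 0 m by rewrite mem_iota.
    by move=> /(term_le_sum (fun r => (w r == g : nat))); rewrite wr eqxx.
  apply: leq_sum_in => r; rewrite mem_iota add0n => /andP [_ rm].
  have B : \sum_(g <- Gp) (w r == g) * nn g <= nn (w r) * (w r \in Gp).
    apply: (@leq_trans (\sum_(g <- Gp) (w r == g) * nn (w r))).
      by apply: leq_sum_in => g _; case: eqP => [->|]; rewrite ?mul0n.
    rewrite -big_distrl /= sum_bool_count mulnC leq_mul2l; apply/orP; right.
    have -> : count (fun g => w r == g) Gp = count (pred1 (w r)) Gp.
      by apply: eq_count => g /=; rewrite eq_sym.
    by rewrite (count_uniq_mem _ uG).
  case: (posnP r) => [r0|rpos].
    have : w r \in Gp = false by rewrite r0 w0; apply/negP => /Gpos.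
    move=> E; rewrite E muln0 in B; rewrite muln1.
    by move: B; rewrite leqn0 => /eqP ->; rewrite addn0 r0 w0 nn0.
  rewrite muln0 add0n; apply: leq_trans B _.
  by case: (_ \in _); rewrite ?muln1 ?muln0.
have fin : c <= (size Gp).+1 * (q + \sum_(g <- Gp) nn g).
  move: step1 S1 S2 S3 S4; rewrite -Hcq.
  move: (\sum_(r <- _) _) (\sum_(r <- _) _) (\sum_(r <- _) _) (\sum_(r <- _) _) => X1 X2 X3 X4.
  have -> : (size Gp).+1 * (q + \sum_(g <- Gp) nn g) = q + q * size Gp + (size Gp).+1 * \sum_(g <- Gp) nn g.
    by rewrite mulnDr mulSn [size Gp * q]mulnC addnA.
  move: (q * size Gp) ((size Gp).+1 * \sum_(g <- Gp) nn g) => Y Z.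
  lia.
apply: leq_trans fin _; by rewrite leq_mul2l step2 orbT.
Qed.
Lemma sumn_map_sum (s : seq nat) (F : nat -> nat) : sumn [seq F x | x <- s] = \sum_(x <- s) F x.
Proof. elim: s => [|x s IH]; by rewrite ?big_nil // big_cons /= IH. Qed.

Lemma L_bound (S : pred nat) (m c : nat) (w nn : nat -> nat) :
  0 < m ->
  (forall r, r < m -> w r %% m = r) ->
  (forall r, r < m -> S (w r)) ->
  (forall r, r < m -> w r < c + m) ->
  (forall x k, S x -> S (x + k * m)) ->
  (forall x, nn x = (c + m - 1 - x) %/ m) ->
  \sum_(r <- iota 0 m) nn (w r) <= count S (iota 0 c).
Proof.
move=> m0 wmod wS wlt Sm nnE.
set Lst := [seq w r + j * m | r <- iota 0 m, j <- iota 0 (nn (w r))].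
have -> : \sum_(r <- iota 0 m) nn (w r) = size Lst.
  rewrite size_allpairs_dep -sumn_map_sum; congr sumn; apply: eq_map => r.
  by rewrite size_iota.
rewrite -size_filter; apply: uniq_leq_size.
  apply: allpairs_uniq_dep; first exact: iota_uniq.
    by move=> r _; exact: iota_uniq.
  move=> [r1 j1] [r2 j2] /allpairsPdep [x1 [y1 [Hx1 _ E1]]] /allpairsPdep [x2 [y2 [Hx2 _ E2]]] /=.
  case: E1 => -> ->; case: E2 => -> -> Heq.
  move: Hx1 Hx2; rewrite !mem_iota !add0n => /andP [_ x1m] /andP [_ x2m].
  have Er : x1 = x2.
    by rewrite -(wmod _ x1m) -(wmod _ x2m) -(modnMDl y1 (w x1)) -(modnMDl y2 (w x2)) !(addnC (_ * m)) Heq.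
  subst x2; move/eqP: Heq; rewrite eqn_add2l eqn_mul2r (gtn_eqF m0) /= => /eqP ->.
  by [].
move=> z /allpairsPdep [r [j [Hr Hj ->]]].
move: Hr Hj; rewrite !mem_iota !add0n => /andP [_ rm] /andP [_ jn].
rewrite mem_filter Sm ?wS //= mem_iota /= add0n.
have H1 := leq_trunc_div (c + m - 1 - w r) m. rewrite -nnE in H1.
have H2 : j.+1 * m <= nn (w r) * m by rewrite leq_mul2r jn orbT.
have H3 := wlt r rm.
rewrite mulSn in H2. move: H1 H2 H3; move: (j * m) (nn (w r) * m) => A B. lia.
Qed.

Definition wf (S : pred nat) (m c r : nat) :=
  find (fun x => S x && (x %% m == r)) (iota 0 ((c+1) * m)).

Lemma wf_spec (S : pred nat) m c r : 0 < m -> r < m -> (forall n, c <= n -> S n) ->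
  [/\ S (wf S m c r), wf S m c r %% m = r & forall x, S x -> x %% m = r -> wf S m c r <= x].
Proof.
move=> m0 rm Hc.
set P := fun x => S x && (x %% m == r).
have Hwit : P (r + c * m).
  rewrite /P Hc; last by have : 1 <= m by []; nia.
  by rewrite addnC modnMDl modn_small ?eqxx.
have Hin : r + c * m < (c + 1) * m by rewrite mulnDl mul1n addnC ltn_add2l.
have Hhas : has P (iota 0 ((c+1) * m)).
  apply/hasP; exists (r + c * m) => //; by rewrite mem_iota.
have Hlt : wf S m c r < (c+1) * m by move: Hhas; rewrite has_find size_iota.
have HP : P (wf S m c r).
  have := nth_find 0 Hhas; by rewrite nth_iota // add0n.
move: HP; rewrite /P => /andP [Hs /eqP Hr]; split => // x Sx xr.
case: (leqP (wf S m c r) x) => // Hx.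
have := before_find 0 Hx; rewrite nth_iota ?add0n; last by apply: ltn_trans Hlt.
by rewrite /P Sx xr eqxx.
Qed.

Lemma wilf_main (S : pred nat) (c : nat) (gens : seq nat) :
  is_numerical_semigroup S -> is_conductor S c -> sorted ltn gens ->
  (forall x, x \in gens <-> min_gen S x) ->
  c + nth 0 gens 0 < 3 * nth 0 gens 1 -> c <= size gens * card_L S c.
Proof.
move=> [S0 [Sadd _]] [Hc _] Hsort Hmem H3.
case: gens Hsort Hmem H3 => [|x0 [|x1 G]] Hsort Hmem H3 /=; try (simpl in H3; lia).
simpl in H3.
set Gp := x1 :: G.
have mg0 : min_gen S x0 by apply/Hmem; rewrite inE eqxx.
have [Sm0 [m0 _]] := mg0.
have allm : all (ltn x0) Gp := order_path_min ltn_trans Hsort.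
have all1 : all (ltn x1) G.
  apply: (order_path_min ltn_trans); by move: Hsort => /= /andP [].
have GpF : forall g, g \in Gp -> x0 < g /\ x1 <= g.
  move=> g Hg; split; first by move/allP: allm => /(_ g Hg).
  move: Hg; rewrite inE => /orP [/eqP -> //|Hg].
  by move/allP: all1 => /(_ g Hg) /ltnW.
have uG : uniq Gp by apply: (sorted_uniq ltn_trans ltnn); exact: path_sorted Hsort.
have Smul : forall x k, S x -> S (x + k * x0).
  move=> x k Sx; elim: k => [|k IH]; first by rewrite mul0n addn0.
  by rewrite mulSn addnCA addnC; apply: Sadd.
have dec : forall y, S y -> 0 < y -> min_gen S y \/
     exists u v, [/\ 0 < u, 0 < v, S u, S v & y = u + v].
  move=> y Sy y0.
  case: (classic (exists u v, 0 < u /\ 0 < v /\ S u /\ S v /\ y = u + v)) => H.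
    right; move: H => [u [v [H1 [H2 [H4 [H5 H6]]]]]]; by exists u, v.
  by left.
have mgin : forall y, min_gen S y -> y = x0 \/ y \in Gp.
  by move=> y /Hmem; rewrite inE => /orP [/eqP|]; [left|right].
pose Ap y := ~ (x0 <= y /\ S (y - x0)).
have ap_piece : forall u v, S v -> Ap (u + v) -> Ap u.
  move=> u v Sv H [Hu Su]; apply: H; split; first lia.
  have -> : u + v - x0 = (u - x0) + v by lia.
  exact: Sadd.
have ap_ge : forall y, S y -> 0 < y -> Ap y -> x1 <= y.
  elim/ltn_ind => y IH Sy y0 Apy.
  case: (dec y Sy y0) => [mg|[u [v [u0 v0 Su Sv E]]]].
    case: (mgin y mg) => [Ey|Hy]; last by case: (GpF y Hy).
    by exfalso; apply: Apy; rewrite Ey subnn; split.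
  have Apu : Ap u by apply: (ap_piece u v); rewrite -?E.
  have : x1 <= u by apply: IH => //; lia.
  lia.
have mg_Gp : forall y, min_gen S y -> Ap y -> y \in Gp.
  move=> y mg Apy; case: (mgin y mg) => // Ey.
  by exfalso; apply: Apy; rewrite Ey subnn; split.
pose w := wf S x0 c.
have wS : forall r, r < x0 -> S (w r) by move=> r rm; case: (wf_spec m0 rm Hc).
have wmod : forall r, r < x0 -> w r %% x0 = r by move=> r rm; case: (wf_spec m0 rm Hc).
have wmin : forall r, r < x0 -> forall x, S x -> x %% x0 = r -> w r <= x
  by move=> r rm; case: (wf_spec m0 rm Hc).
have wap : forall r, r < x0 -> Ap (w r).
  move=> r rm [H1 H2].
  have : w r <= w r - x0.
    have E : (w r - x0) %% x0 = w r %% x0 by rewrite -{2}(subnK H1) modnDr.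
    by apply: wmin => //; rewrite E wmod.
  lia.
have wlt : forall r, r < x0 -> w r < c + x0.
  move=> r rm; case: (leqP (c + x0) (w r)) => // H.
  exfalso; apply: (wap r rm); split; first lia.
  apply: Hc; lia.
have w0 : w 0 = 0.
  apply/eqP; rewrite -leqn0; apply: wmin => //; by rewrite mod0n.
have Gex : forall g, g \in Gp -> exists2 r, r < x0 & w r = g.
  move=> g Hg; exists (g %% x0); first by rewrite ltn_mod.
  have [gm g1] := GpF g Hg.
  have mgg : min_gen S g by apply/Hmem; rewrite inE Hg orbT.
  have Sg : S g by case: mgg.
  have Hle : w (g %% x0) <= g by apply: wmin; rewrite ?ltn_mod.
  case: (ltngtP (w (g %% x0)) g) => // Hlt; last by move: Hle; rewrite leqNgt Hlt.
  exfalso.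
  set x := w (g %% x0) in Hle Hlt.
  have rm : g %% x0 < x0 by rewrite ltn_mod.
  have Sx : S x by apply: wS.
  have xm : x %% x0 = g %% x0 by apply: wmod.
  have : x0 %| g - x by rewrite -eqn_mod_dvd ?xm // ltnW.
  case/dvdnP => k Hk.
  have k0 : 0 < k by case: k Hk => [|k] //; rewrite mul0n; lia.
  have Sgm : S (g - x0).
    have -> : g - x0 = x + k.-1 * x0.
      have : g = x + k * x0 by lia.
      case: k Hk k0 => [|k] // _ _ ->; rewrite mulSn /=; lia.
    exact: Smul.
  case: mgg => _ [_ []]; exists x0, (g - x0); split => //; split; first lia.
  by split => //; split => //; lia.
set q := (c + x0 - 1) %/ x0.
set rho := q * x0 - c.
have Hq1 := ltn_ceil (c + x0 - 1) m0. have Hq2 := leq_trunc_div (c + x0 - 1) x0.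
rewrite -/q in Hq1 Hq2. rewrite mulSn in Hq1.
have Hcq : c + rho = q * x0 by rewrite /rho; move: Hq1 Hq2; move: (q * x0) => Q; lia.
have Hrho : rho <= x0 by rewrite /rho; move: Hq1 Hq2; move: (q * x0) => Q; lia.
pose nn := fun x => (c + x0 - 1 - x) %/ x0.
have Hcl : forall r, r < x0 -> 0 < r -> w r \in Gp \/ exists g h, [/\ g \in Gp, h \in Gp, g <= h, w r = g + h &
        q <= nn g + nn h + (c + x0 - rho <= w r)].
  move=> r rm r0.
  have w0' : 0 < w r.
    case: (posnP (w r)) => // E; move: (wmod r rm); rewrite E mod0n; lia.
  case: (dec (w r) (wS r rm) w0') => [mg|[u [v [u0 v0 Su Sv E]]]].
    by left; apply: mg_Gp => //; exact: wap.
  right.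
  have Apu : Ap u by apply: (ap_piece u v) => //; rewrite -E; exact: wap.
  have Apv : Ap v by apply: (ap_piece v u) => //; rewrite addnC -E; exact: wap.
  have gen : forall y z, S y -> 0 < y -> Ap y -> w r = y + z -> S z -> 0 < z -> Ap z -> y \in Gp.
    move=> y z Sy y0 Apy Ey Sz z0 Apz.
    case: (dec y Sy y0) => [mg|[y1 [y2 [y10 y20 Sy1 Sy2 Ey2]]]]; first exact: mg_Gp.
    exfalso.
    have A1 : Ap y1 by apply: (ap_piece y1 y2) => //; rewrite -Ey2.
    have A2 : Ap y2 by apply: (ap_piece y2 y1) => //; rewrite addnC -Ey2.
    have := ap_ge y1 Sy1 y10 A1. have := ap_ge y2 Sy2 y20 A2. have := ap_ge z Sz z0 Apz.
    have := wlt r rm. lia.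
  have uG' : u \in Gp by apply: (gen u v).
  have vG' : v \in Gp by apply: (gen v u) => //; rewrite addnC.
  have Hpair := @nn_pair c x0 u v m0.
  rewrite -E in Hpair; have Hp := Hpair (wlt r rm).
  rewrite -/q -/rho in Hp.
  case: (leqP u v) => Huv.
    by exists u, v; split.
  exists v, u; split => //; [exact: ltnW | by rewrite addnC | by rewrite (addnC (nn v))].
have main := @count_main x0 c q rho w nn Gp m0 uG wmod wlt Hcq Hrho w0 _ _ Gex Hcl.
have Lb := @L_bound S x0 c w nn m0 wmod wS wlt Smul (fun x => erefl).
rewrite /card_L.
apply: leq_trans (main _ _) _.
- by rewrite /nn subn0.
- by move=> g /GpF [H _]; apply: leq_ltn_trans H.
- by rewrite leq_mul2l Lb orbT.
Qed.

Local Open Scope ring_scope.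

Lemma conv (a c m : nat) : (a%:R > (c%:R + m%:R) / 3 :> rat) -> (c + m < 3 * a)%N.
Proof.
rewrite ltr_pdivrMr // -natrD.
have -> : (a%:R * 3 : rat)%R = (a * 3)%:R by rewrite natrM.
by rewrite ltr_nat mulnC.
Qed.

Theorem theorem4p5 :
  forall eps : rat, 0 < eps ->
  exists nu0 : nat,
  forall (S : pred nat) (c : nat) (gens : seq nat),
    is_numerical_semigroup S ->
    is_conductor S c ->
    sorted ltn gens ->
    (forall x, x \in gens <-> min_gen S x) ->
    let nu := size gens in
    let mu := nth 0%N gens 0 in
    let a2 := nth 0%N gens 1 in
    (a2%:R > (c%:R + mu%:R) / 3 :> rat) ->
    (nu0 <= nu)%N ->
    (mu%:R <= 8%:R / 25%:R * nu%:R ^+ 2 + nu%:R / 5%:R - 1 / 2%:R - eps :> rat) ->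
    (c <= nu * card_L S c)%N.
Proof.
move=> eps _; exists 0%N => S c gens HS Hc Hsort Hmem nu mu a2 Ha2 _ _.
apply: wilf_main => //; exact: conv Ha2.
Qed.
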